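(* Let $n\ge 2$, $t\ge 1$ be integers and $q$ a prime power, and let $\mathcal{D}$ be the Desarguesian $(t-1)$-spread of $\mathrm{PG}(nt-1,q)$. Let $B$ be a minimal blocking set with respect to the hyperplanes of $\mathrm{PG}(n-1,q^t)$. Then there exists a minimal blocking set $B'$ with respect to $(nt-t-1)$-dimensional subspaces of $\mathrm{PG}(nt-1,q)$ such that $B=\mathcal{B}(B')$.
   Context: Field reduction: each point of $\mathrm{PG}(n-1,q^t)$ is a $1$-dimensional $\mathbb{F}_{q^t}$-subspace of $\mathbb{F}_{q^t}^n$, hence a $t$-dimensional $\mathbb{F}_q$-subspace of $\mathbb{F}_q^{nt}$, i.e. a $(t-1)$-dimensional subspace of $\mathrm{PG}(nt-1,q)$; the set $\mathcal{D}$ of these $(t-1)$-spaces partitions the points of $\mathrm{PG}(nt-1,q)$ (the Desarguesian $(t-1)$-spread). For $U\subseteq\mathrm{PG}(nt-1,q)$, $\mathcal{B}(U)$ is the set of elements of $\mathcal{D}$ meeting $U$, identified with the corresponding points of $\mathrm{PG}(n-1,q^t)$. A blocking set with respect to $j$-spaces is a point set meeting every $j$-dimensional subspace; minimal means no proper subset is such a blocking set. *)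

(* Defs.v *)
From HB Require Import structures.
From mathcomp Require Import all_boot all_order all_algebra all_field.
Set Implicit Arguments. Unset Strict Implicit. Unset Printing Implicit Defensive.
Import GRing.Theory.
Local Open Scope ring_scope.

(* Projective geometry PG(V) of a finite-dimensional vector space V over K:
   projective points = 1-dimensional subspaces, projective j-spaces =
   (j+1)-dimensional subspaces. *)
Section PG.
Variables (K : fieldType) (vT : vectType K).

Definition is_point (P : {vspace vT}) : Prop := \dim P = 1%N.

Definition blocking_set (B : {vspace vT} -> Prop) (d : nat) : Prop :=
  (forall P, B P -> is_point P) /\
  (forall S : {vspace vT}, \dim S = d -> exists P, B P /\ (P <= S)%VS).

Definition minimal_blocking_set (B : {vspace vT} -> Prop) (d : nat) : Prop :=
  blocking_set B d /\
  (forall B' : {vspace vT} -> Prop, (forall P, B' P -> B P) ->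
      blocking_set B' d -> forall P, B P -> B' P).
End PG.

(* L is an extension of degree t = \dim {:L} of the finite
   field F.  The ambient space L^n is viewed both as an L-vector space
   (VL n, giving PG(n-1,q^t)) and as an F-vector space (VF n, of dimension nt,
   giving PG(nt-1,q)); both have the same carrier {ffun 'I_n -> L}. *)
Section FieldReduction.
Variables (F : finFieldType) (L : fieldExtType F).

Definition VF (n : nat) := {ffun 'I_n -> L}.
Definition VL (n : nat) := {ffun 'I_n -> L^o}.

(* The Desarguesian spread element corresponding to an L-point P of VL n is
   P itself viewed as a (t-dimensional) F-subspace.  B(U) is the set of
   L-points whose spread element meets (shares a nonzero vector with) some
   point of U. *)
Definition field_red_B (n : nat) (U : {vspace VF n} -> Prop)
    (P : {vspace VL n}) : Prop :=
  is_point P /\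
  exists P' : {vspace VF n}, U P' /\
    exists v : VF n, v != 0 /\ v \in P' /\ ((v : VL n) \in P).
End FieldReduction.

(* Main.v *)
Require Import Defs.
From HB Require Import structures.
From mathcomp Require Import all_boot all_order all_algebra all_field.
From mathcomp Require Import zify.
From Stdlib Require Import Classical ClassicalEpsilon.
Set Implicit Arguments. Unset Strict Implicit. Unset Printing Implicit Defensive.
Import GRing.Theory.
Definition pb (P : Prop) : bool := if excluded_middle_informative P then true else false.
Lemma pbP (P : Prop) : reflect P (pb P).
Proof. by rewrite /pb; case: excluded_middle_informative => h; constructor. Qed.

Definition img (T : finType) (X : Type) (pt : T -> X) (A : {set T}) (x : X) : Prop :=
  exists2 v, v \in A & x = pt v.

Lemma minimal_sub (T : finType) (X : Type) (pt : T -> X) (Blk : (X -> Prop) -> Prop)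
  (Hext : forall Q1 Q2 : X -> Prop, (forall x, Q1 x <-> Q2 x) -> Blk Q1 -> Blk Q2) :
  forall A : {set T}, Blk (img pt A) ->
  exists A' : {set T}, [/\ A' \subset A, Blk (img pt A') &
    (forall Q : X -> Prop, (forall x, Q x -> img pt A' x) -> Blk Q ->
        forall x, img pt A' x -> Q x)].
Proof.
suff main : forall k (A : {set T}), #|A| <= k -> Blk (img pt A) ->
  exists A' : {set T}, [/\ A' \subset A, Blk (img pt A') &
    (forall Q : X -> Prop, (forall x, Q x -> img pt A' x) -> Blk Q ->
        forall x, img pt A' x -> Q x)].
  by move=> A; apply: (main #|A|).
elim=> [|k IH] A hk hA.
  exists A; split => // Q HQ _ x [v vA]; move: hk; rewrite leqn0 => /eqP/cards0_eq A0.
  by rewrite A0 in_set0 in vA.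
case: (classic (forall Q : X -> Prop, (forall x, Q x -> img pt A x) -> Blk Q ->
        forall x, img pt A x -> Q x)) => [h|h].
  by exists A; split.
have [Q hQ] := not_all_ex_not _ _ h.
have [HQ hQ2] := imply_to_and _ _ hQ.
have [BQ hQ3] := imply_to_and _ _ hQ2.
have [x hx] := not_all_ex_not _ _ hQ3.
have [[v0 v0A Ex] nQ] := imply_to_and _ _ hx.
subst x.
pose A2 := [set v in A | pb (Q (pt v))].
have eq2 : forall y, Q y <-> img pt A2 y.
  move=> y; split.
    move=> Qy; have [v vA Ey] := HQ y Qy; rewrite Ey in Qy *; exists v => //.
    by rewrite inE vA /=; apply/pbP.
  by case=> v; rewrite inE => /andP [_ /pbP] ? ->.
have sub2 : A2 \subset A by apply/subsetP => v; rewrite inE => /andP [].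
have hk2 : #|A2| <= k.
  have : A2 \proper A.
    apply/properP; split => //; exists v0 => //.
    by rewrite inE v0A /=; apply/negP => /pbP.
  by move/proper_card => hh; rewrite -ltnS; exact: leq_trans hh hk.
have [A' [s' b' m']] := IH A2 hk2 (Hext _ _ eq2 BQ).
by exists A'; split => //; apply: subset_trans sub2.
Qed.
Local Open Scope ring_scope.
Lemma pick_dim (K : fieldType) (vT : vectType K) (U W : {vspace vT}) k :
  (U <= W)%VS -> (\dim U <= k <= \dim W)%N ->
  exists V : {vspace vT}, [/\ (U <= V)%VS, (V <= W)%VS & \dim V = k].
Proof.
move=> UW /andP[h1 h2]; have [d Hd] : exists d, k = (\dim U + d)%N by exists (k - \dim U)%N; lia.
elim: d U UW h1 Hd => [|d IH] U UW h1 Hd.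
  by exists U; rewrite Hd addn0.
have : ~~ (W <= U)%VS.
  apply/negP => WU; have := dimvS WU; lia.
case/subvPn => w Ww wU.
have w0 : w != 0 by apply: contraNneq wU => ->; rewrite mem0v.
have cap0 : (U :&: <[w]> <= 0)%VS.
  apply/subvP => x /memv_capP [xU /vlineP [c xc]].
  rewrite memv0; apply/negPn/negP => x0.
  have c0 : c != 0 by apply: contraNneq x0 => c0; rewrite xc c0 scale0r.
  move: wU; rewrite (_ : w = c^-1 *: x) ?memvZ //.
  by rewrite xc scalerA mulVf // scale1r.
have dU' : \dim (U + <[w]>) = (\dim U + 1)%N.
  have := (dimv_add_leqif U <[w]>).2; rewrite cap0 dim_vline w0. by move/eqP.
have [|||V [UV VW dV]] := IH (U + <[w]>)%VS.
- by rewrite subv_add UW -memvE.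
- lia.
- lia.
exists V; split => //; apply: subv_trans UV; exact: addvSl.
Qed.

Lemma dim_bigcap (K : fieldType) (vT : vectType K) (I : Type) (r : seq I)
    (Us : I -> {vspace vT}) :
  (forall i, \dim {:vT} - 1 <= \dim (Us i))%N ->
  (\dim {:vT} - size r <= \dim (\bigcap_(i <- r) Us i))%N.
Proof.
move=> HU; elim: r => [|i r IH] /=; first by rewrite big_nil subn0.
rewrite big_cons.
have := dimv_sum_cap (Us i) (\bigcap_(j <- r) Us j).
have := dimvS (subvf (Us i + \bigcap_(j <- r) Us j)).
have := HU i; lia.
Qed.
Section FR.
Variables (F : finFieldType) (L : fieldExtType F) (n : nat).
Local Notation VF := (VF L n).
Local Notation VL := (VL L n).

Lemma scaleFL (c : F) (x : VF) : (c *: x : VF) = ((c%:A : L) *: (x : VL) : VL).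
Proof. by apply/ffunP => i; rewrite !ffunE -[LHS]mulr_algl. Qed.

Lemma addFL (x y : VF) : (x + y : VF) = ((x : VL) + (y : VL) : VL).
Proof. by []. Qed.

Lemma dimVF : \dim (fullv : {vspace VF}) = (n * \dim {:L})%N.
Proof. rewrite !dimvf. transitivity (#|'I_n| * \dim {:L})%N; first by rewrite dimvf. by rewrite card_ord dimvf. Qed.

Lemma dimVL : \dim (fullv : {vspace VL}) = n.
Proof. rewrite !dimvf. transitivity (#|'I_n| * 1)%N; first by []. by rewrite card_ord muln1. Qed.

Definition mulL (l : L) (x : VF) : VF := (l *: (x : VL) : VL).
Lemma mulL_lin l : linear (mulL l).
Proof. move=> c x y; rewrite /mulL scaleFL scaleFL addFL scalerDr !scalerA mulrC. done. Qed.
HB.instance Definition _ l := GRing.isLinear.Build F VF VF _ (mulL l) (mulL_lin l).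

Definition mulv (x : VF) (l : L) : VF := (l *: (x : VL) : VL).
Lemma mulv_lin x : linear (mulv x).
Proof. move=> c l m; rewrite /mulv scaleFL addFL scalerDl scalerA. congr (_ + _).
 by rewrite mulr_algl. Qed.
HB.instance Definition _ x := GRing.isLinear.Build F L VF _ (mulv x) (mulv_lin x).

Local Notation t := (\dim {:L}).
Definition eL := vbasis (fullv : {vspace L}).
Definition gensF (U : {vspace VL}) : seq VF := [seq mulv b e | e <- eL, b <- vbasis U].
Definition toF (U : {vspace VL}) : {vspace VF} := <<gensF U>>%VS.

Lemma memL_sum (U : {vspace VL}) (I : Type) (r : seq I) (P : pred I) (f : I -> VF) :
  (forall i, P i -> ((f i : VL) \in U)) -> ((\sum_(i <- r | P i) f i : VF) : VL) \in U.
Proof.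
move=> H; apply: (big_ind (fun y : VF => (y : VL) \in U)) => //.
- exact: mem0v.
- by move=> x y Hx Hy; rewrite addFL; apply: memvD.
Qed.

Lemma memF_sum (W : {vspace VF}) (I : Type) (r : seq I) (P : pred I) (f : I -> VL) :
  (forall i, P i -> ((f i : VF) \in W)) -> ((\sum_(i <- r | P i) f i : VL) : VF) \in W.
Proof.
move=> H; apply: (big_ind (fun y : VL => (y : VF) \in W)) => //.
- exact: mem0v.
- by move=> x y Hx Hy; apply: memvD.
Qed.

Lemma memF (U : {vspace VL}) (x : VF) : (x \in toF U) = ((x : VL) \in U).
Proof.
apply/idP/idP.
- move=> /(@coord_span _ _ _ (in_tuple (gensF U))) ->.
  apply: memL_sum => i _; rewrite scaleFL; apply: memvZ.
  have /allpairsP [[e b] [He Hb ->]] := mem_nth 0 (ltn_ord i).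
  by rewrite /mulv /=; apply: memvZ; apply: vbasis_mem.
- move=> /coord_vbasis ->; apply: memF_sum => j _.
  rewrite [X in X *: _](@coord_vbasis _ _ _ fullv) ?memvf // scaler_suml.
  apply: memF_sum => i _.
  have -> : (((coord eL i (coord (vbasis U) j x) *: eL`_i) *: (vbasis U)`_j : VL) : VF)
     = coord eL i (coord (vbasis U) j x) *: mulv (vbasis U)`_j eL`_i.
    by rewrite /mulv scaleFL scalerA mulr_algl.
  apply: memvZ; apply: memv_span; apply/allpairsP.
  by exists (eL`_i, (vbasis U)`_j); rewrite /= !mem_nth ?size_tuple.
Qed.

Lemma dim_toF_le U : (\dim (toF U) <= t * \dim U)%N.
Proof. by apply: leq_trans (dim_span _) _; rewrite size_allpairs !size_tuple. Qed.


Lemma t_gt0 : (0 < t)%N.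
Proof. by rewrite adim_gt0. Qed.

Lemma dimL_le (U : {vspace VL}) : (\dim U <= n)%N.
Proof. by have := dimvS (subvf U); rewrite dimVL. Qed.

Lemma dim_toF_ge U : (t * \dim U <= \dim (toF U))%N.
Proof.
have Hfull : (fullv <= toF U + toF U^C)%VS.
  apply/subvP => x _.
  have : (x : VL) \in (U + U^C)%VS by rewrite addv_complf memvf.
  case/memv_addP => u Hu [c Hc Hx].
  have -> : x = (u : VF) + (c : VF) by rewrite addFL -Hx.
  by apply: memv_add; rewrite memF.
have h1 := dimvS Hfull; rewrite dimVF in h1.
have h2 := (dimv_add_leqif (toF U) (toF U^C)).1.
have h3 := dim_toF_le U^C; rewrite dimv_compl dimVL in h3.
have h4 := dimL_le U.
have h5 := dim_toF_le U.
nia.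
Qed.

Lemma dim_toF U : \dim (toF U) = (t * \dim U)%N.
Proof. by apply/eqP; rewrite eqn_leq dim_toF_le dim_toF_ge. Qed.


Lemma eL_neq0 (i : 'I_t) : eL`_i != 0.
Proof. by apply: (free_not0 (basis_free (vbasisP fullv))); rewrite mem_nth ?size_tuple. Qed.

Definition Ki (Z : {vspace VF}) (i : 'I_t) : {vspace VF} :=
  (linfun (mulL (eL`_i)^-1) @: Z)%VS.

Lemma dim_Ki Z i : \dim (Ki Z i) = \dim Z.
Proof.
apply: limg_dim_eq; apply/eqP; rewrite -subv0; apply/subvP => x /memv_capP [_].
rewrite memv_ker lfunE /= /mulL memv0 => H.
have : ((eL`_i)^-1 *: (x : VL) == (0 : VL)) := H.
by rewrite scaler_eq0 invr_eq0 (negbTE (eL_neq0 i)) /=.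
Qed.

Lemma mem_Ki Z i x : x \in Ki Z i -> mulL eL`_i x \in Z.
Proof.
case/memv_imgP => z Hz ->; rewrite lfunE /= /mulL.
by rewrite scalerA mulfV ?eL_neq0 // scale1r.
Qed.

Definition Kof (Z : {vspace VF}) : {vspace VF} := (\bigcap_(i < t) Ki Z i)%VS.

Lemma mem_Kof Z x (l : L) : x \in Kof Z -> mulL l x \in Z.
Proof.
move=> Hx.
have Hi (i : 'I_t) : mulL eL`_i x \in Z.
  by apply: mem_Ki; apply: (subvP (bigcapv_inf i (erefl true) (subvv _))).
rewrite (@coord_vbasis _ _ l fullv) ?memvf //.
have -> : mulL (\sum_(i < t) coord eL i l *: eL`_i) x
        = mulv x (\sum_(i < t) coord eL i l *: eL`_i) by [].
rewrite linear_sum; apply: rpred_sum => i _; rewrite linearZ /=.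
by apply: rpredZ; apply: Hi.
Qed.

Lemma dim_Kof Z : (\dim Z = n * t - 1)%N -> (n * t - t <= \dim (Kof Z))%N.
Proof.
move=> dZ; have := @dim_bigcap _ _ _ (index_enum 'I_t) (Ki Z).
have hs : size (index_enum 'I_t) = t by rewrite -[RHS](card_ord t) cardT enumT.
rewrite hs; move=> H; have := dimVF; move=> e; move: H; rewrite e; apply => i; by rewrite dim_Ki dZ.
Qed.


Definition toL (W : {vspace VF}) : {vspace VL} := <<(vbasis W : seq VF) : seq VL>>%VS.

Lemma toL_mem (W : {vspace VF}) (x : VF) : x \in W -> (x : VL) \in toL W.
Proof.
move/coord_vbasis ->; apply: memL_sum => i _; rewrite scaleFL; apply: memvZ.
by apply: memv_span; rewrite mem_nth ?size_tuple.
Qed.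

Lemma toL_prop (Z K : {vspace VF}) : (forall y l, y \in K -> mulL l y \in Z) ->
  forall x : VF, (x : VL) \in toL K -> forall l, mulL l x \in Z.
Proof.
move=> HK x /(@coord_span _ _ _ (in_tuple ((vbasis K : seq VF) : seq VL))) -> l.
rewrite /mulL scaler_sumr; apply: memF_sum => i _; rewrite scalerA.
by apply: HK; apply: vbasis_mem; rewrite mem_nth.
Qed.

Lemma dim_toL W : (\dim W <= t * \dim (toL W))%N.
Proof. by rewrite -dim_toF; apply: dimvS; apply/subvP => x Hx; rewrite memF; apply: toL_mem. Qed.

Lemma blockF (B : {vspace VL} -> Prop) : (1 < n)%N -> blocking_set B (n - 1) ->
  forall S : {vspace VF}, \dim S = (n * t - t)%N ->
  exists w : VF, [/\ w != 0, w \in S & exists P, B P /\ (w : VL) \in P].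
Proof.
move=> n2 [Bpt Bblk] S dS.
have tp := t_gt0.
have [|Z [SZ _ dZ]] := @pick_dim _ _ S fullv (n * t - 1)%N (subvf S).
  by rewrite dS dimVF; apply/andP; split; nia.
have dK := dim_Kof dZ.
have dL := dim_toL (Kof Z).
have [|H [_ HK dH]] := @pick_dim _ _ 0%VS (toL (Kof Z)) (n - 1)%N (sub0v _).
  by rewrite dimv0 /=; nia.
have [P [BP PH]] := Bblk H dH.
have dP := Bpt P BP.
have vP : vpick P \in P := memv_pick P.
have v0 : vpick P != 0 by rewrite vpick0 -dimv_eq0 dP.
have dA : \dim (linfun (mulv (vpick P)) @: fullv)%VS = t.
  apply: limg_dim_eq; apply/eqP; rewrite -subv0; apply/subvP => l /memv_capP [_].
  rewrite memv_ker lfunE /= /mulv memv0 => Hl.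
  have : (l *: (vpick P : VL) == (0 : VL)) := Hl.
  by rewrite scaler_eq0 (negbTE v0) orbF.
have AZ : (linfun (mulv (vpick P)) @: fullv <= Z)%VS.
  apply/subvP => y /memv_imgP [l _ ->]; rewrite lfunE /=.
  have := @toL_prop Z (Kof Z) (fun y l Hy => mem_Kof l Hy) (vpick P).
  by apply; apply: (subvP HK); apply: (subvP PH).
have AP y : y \in (linfun (mulv (vpick P)) @: fullv)%VS -> (y : VL) \in P.
  by case/memv_imgP => l _ ->; rewrite lfunE /= /mulv; apply: memvZ.
have : (0 < \dim ((linfun (mulv (vpick P)) @: fullv) :&: S))%N.
  have := dimv_sum_cap (linfun (mulv (vpick P)) @: fullv)%VS S.
  have : (linfun (mulv (vpick P)) @: fullv + S <= Z)%VS by rewrite subv_add AZ SZ.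
  move/dimvS; rewrite dZ dA dS; nia.
rewrite lt0n dimv_eq0 -vpick0 => w0.
have /memv_capP [wA wS] := memv_pick ((linfun (mulv (vpick P)) @: fullv) :&: S)%VS.
exists (vpick ((linfun (mulv (vpick P)) @: fullv) :&: S)%VS); split => //.
by exists P; split => //; apply: AP.
Qed.

Definition TT := {ffun 'I_n -> finvect_type L}.
Definition ptF (v : TT) : {vspace VF} := <[(v : VF)]>%VS.

Lemma pt_eq (P Q : {vspace VL}) (v : VL) : is_point P -> is_point Q -> v != 0 ->
  v \in P -> v \in Q -> P = Q.
Proof.
rewrite /is_point => dP dQ v0 vP vQ.
have eP : <[v]>%VS = P by apply/eqP; rewrite eqEdim -memvE vP dP dim_vline v0.
have eQ : <[v]>%VS = Q by apply/eqP; rewrite eqEdim -memvE vQ dQ dim_vline v0.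
by rewrite -eP -eQ.
Qed.

Lemma main_sec : (1 < n)%N -> forall B : {vspace VL} -> Prop,
  minimal_blocking_set B (n - 1) ->
  exists B' : {vspace VF} -> Prop,
    minimal_blocking_set B' (n * t - t) /\
    (forall P : {vspace VL}, B P <-> field_red_B B' P).
Proof.
move=> n2 B [[Bpt Bblk] Bmin].
pose A0 := [set v : TT | ((v : VF) != 0) && pb (exists P, B P /\ ((v : VF) : VL) \in P)].
pose Blk (Q : {vspace VF} -> Prop) := blocking_set Q (n * t - t).
have Hext : forall Q1 Q2 : {vspace VF} -> Prop, (forall x, Q1 x <-> Q2 x) -> Blk Q1 -> Blk Q2.
  move=> Q1 Q2 HQ [h1 h2]; split.
    by move=> P /HQ; apply: h1.
  by move=> S dS; have [P [/HQ QP PS]] := h2 S dS; exists P.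
have hA0 : Blk (img ptF A0).
  split.
  - by move=> P [v]; rewrite inE => /andP [v0 _] ->; rewrite /is_point dim_vline v0.
  - move=> S dS; have [w [w0 wS [P [BP wP]]]] := blockF n2 (conj Bpt Bblk) dS.
    exists <[w]>%VS; split; last by rewrite -memvE.
    exists (w : TT) => //; rewrite inE w0 /=; apply/pbP; by exists P.
have [A' [sA' bA' mA']] := minimal_sub Hext hA0.
exists (img ptF A').
have sub : forall P, field_red_B (img ptF A') P -> B P.
  move=> P [Ppt [P' [[u uA' ->] [v [v0 [vP' vP]]]]]].
  have := subsetP sA' u uA'; rewrite inE => /andP [u0 /pbP [Q [BQ uQ]]].
  have vQ : (v : VL) \in Q.
    by case/vlineP: vP' => c ->; rewrite scaleFL; apply: memvZ.
  by rewrite (pt_eq Ppt (Bpt Q BQ) v0 vP vQ).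
have blk2 : blocking_set (field_red_B (img ptF A')) (n - 1).
  split; first by move=> P [].
  move=> H dH.
  have dHF : \dim (toF H) = (n * t - t)%N by rewrite dim_toF dH mulnBr muln1 mulnC.
  have [P' [[u uA' EP'] P'H]] := bA'.2 (toF H) dHF.
  have := subsetP sA' u uA'; rewrite inE => /andP [u0 _].
  have uH : ((u : VF) : VL) \in H.
    by rewrite -memF; apply: (subvP P'H); rewrite EP' memv_line.
  exists <[(u : VF) : VL]>%VS; split; last by rewrite -memvE.
  split; first by rewrite /is_point dim_vline u0.
  exists P'; split; first by exists u.
  exists (u : VF); split => //; split; [by rewrite EP' memv_line | exact: memv_line].
split.
  by split => // B'' s'' b'' P hP; apply: (mA' B'' s'' b'' P hP).
move=> P; split; last exact: sub.
by move=> BP; apply: (Bmin _ sub blk2 P BP).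
Qed.

End FR.

Theorem theorem5p1 (F : finFieldType) (L : fieldExtType F) (n : nat) :
  (2 <= n)%N ->
  forall B : {vspace VL L n} -> Prop,
    minimal_blocking_set B (n - 1) ->
    exists B' : {vspace VF L n} -> Prop,
      minimal_blocking_set B' (n * \dim {:L} - \dim {:L}) /\
      (forall P : {vspace VL L n}, B P <-> field_red_B B' P).
Proof. by move=> n2 B HB; apply: main_sec. Qed.
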